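(* Let $(R_j)_{j=1}^\infty$ be a sequence of positive reals with $\inf_{j\ge1}R_j>0$, and for each $d$ let ${\bf R}=(R_1,\dots,R_d)$. Let $\alpha,\beta>0$. Then each of the approximation problems $\{I_d: W_2^{\bf R}(\mathbb T^d)\to L_2(\mathbb T^d)\}_{d\in\mathbb N_+}$ and $\{I_d: W_2^{\infty}(\mathbb T^d)\to L_2(\mathbb T^d)\}_{d\in\mathbb N_+}$ is $(\alpha,\beta)$-weakly tractable if and only if ($\alpha>2$ and $\beta>0$) or ($\alpha>0$ and $\beta>1$). In particular, both problems are intractable (not weakly tractable).
   Context: $W_2^{\bf R}(\mathbb T^d)$: Hilbert space of $f\in L_2(\mathbb T^d)$ (normalized measure) with norm $\big(\sum_{{\bf k}\in\mathbb Z^d}(1+\sum_{j=1}^d|k_j|^{2R_j})|\hat f({\bf k})|^2\big)^{1/2}$. $W_2^\infty(\mathbb T^d)$: trigonometric polynomials $\sum_{{\bf k}\in\{-1,0,1\}^d}\hat f({\bf k})e^{i{\bf k}\cdot{\bf x}}$ with norm $\big(\sum_{{\bf k}\in\{-1,0,1\}^d}(1+\sum_j|k_j|)|\hat f({\bf k})|^2\big)^{1/2}$ (the space $\bigwedge_{{\bf m}\in\mathbb N_+^d}W_2^{\bf m}(\mathbb T^d)$ with sup norm). For the identity embedding $I_d:H_d\to L_2(\mathbb T^d)$ (which has norm 1), the $n$th minimal worst-case error is $e(n,d)=a_{n+1}(I_d)$, where $a_n(T)=\inf\{\|T-A\|:\operatorname{rank}A<n\}$, and the information complexity is $n(\varepsilon,d)=\min\{n\in\mathbb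 N: e(n,d)\le\varepsilon\}$ for $\varepsilon\in(0,1)$. The problem is $(\alpha,\beta)$-weakly tractable if $\lim_{\varepsilon^{-1}+d\to\infty}\frac{\ln n(\varepsilon,d)}{\varepsilon^{-\alpha}+d^\beta}=0$; weakly tractable means $(1,1)$-weakly tractable, and intractable means not weakly tractable. *)

(* Defs.v *)
From Stdlib Require Import Reals ZArith List.
Import ListNotations.
Open Scope R_scope.

(* Complex numbers as pairs (Re, Im). *)
Definition Cx : Type := (R * R)%type.
Definition C0 : Cx := (0, 0).
Definition cadd (a b : Cx) : Cx := (fst a + fst b, snd a + snd b).
Definition cmul (a b : Cx) : Cx :=
  (fst a * fst b - snd a * snd b, fst a * snd b + snd a * fst b).
Definition cneg (a : Cx) : Cx := (- fst a, - snd a).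
Definition cn2 (z : Cx) : R := fst z * fst z + snd z * snd z.

(* A function on T^d is represented by its Fourier coefficients, indexed by
   k in Z^d, encoded as lists of integers of length d. *)
Definition Seq : Type := list Z -> Cx.
Definition idx (d : nat) (k : list Z) : Prop := length k = d.

Definition sadd (f g : Seq) : Seq := fun k => cadd (f k) (g k).
Definition ssub (f g : Seq) : Seq := fun k => cadd (f k) (cneg (g k)).
Definition sscal (a : Cx) (f : Seq) : Seq := fun k => cmul a (f k).
Fixpoint lincomb (cs : list Cx) (gs : list Seq) : Seq :=
  match cs, gs with
  | a :: cs', g :: gs' => sadd (sscal a g) (lincomb cs' gs')
  | _, _ => fun _ => C0
  end.

Fixpoint lsum (f : list Z -> R) (s : list (list Z)) : R :=
  match s with nil => 0 | k :: s' => f k + lsum f s' end.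

(* sq_le w d c M  <->  sum_{k in Z^d} w(k) |c(k)|^2 <= M  (supremum of finite
   partial sums, all terms being nonnegative). *)
Definition sq_le (w : list Z -> R) (d : nat) (c : Seq) (M : R) : Prop :=
  forall s : list (list Z), NoDup s -> (forall k, In k s -> idx d k) ->
    lsum (fun k => w k * cn2 (c k)) s <= M.

(* Membership in the weighted Hilbert space with weight w and frequency
   support S (coefficients vanish outside S and outside Z^d). *)
Definition inH (w : list Z -> R) (S : list Z -> Prop) (d : nat) (c : Seq) : Prop :=
  (forall k, ~ (idx d k /\ S k) -> c k = C0) /\ exists M, sq_le w d c M.

Definition one : list Z -> R := fun _ => 1.
(* L_2(T^d) (normalized measure), via Parseval. *)
Definition inL2 (d : nat) (g : Seq) : Prop := inH one (fun _ => True) d g.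

(* a_{n+1}(I_d : H_d -> L_2) <= eps, i.e. e(n,d) <= eps:
   for every delta > 0 there is a linear A : H_d -> L_2 with rank <= n
   (range inside the span of n elements of L_2) and ||I_d - A|| <= eps + delta. *)
Definition e_le (w : list Z -> R) (S : list Z -> Prop) (d n : nat) (eps : R) : Prop :=
  forall delta, 0 < delta ->
  exists (A : Seq -> Seq) (gs : list Seq),
    length gs = n /\
    (forall g, In g gs -> inL2 d g) /\
    (forall f g, inH w S d f -> inH w S d g -> A (sadd f g) = sadd (A f) (A g)) /\
    (forall a f, inH w S d f -> A (sscal a f) = sscal a (A f)) /\
    (forall f, inH w S d f -> exists cs, length cs = n /\ A f = lincomb cs gs) /\
    (forall f M, inH w S d f -> sq_le w d f M ->
       sq_le one d (ssub f (A f)) ((eps + delta) ^ 2 * M)).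

Definition IsInfoComp (w : list Z -> R) (S : list Z -> Prop) (d : nat) (eps : R) (n : nat) : Prop :=
  e_le w S d n eps /\ forall m, (m < n)%nat -> ~ e_le w S d m eps.

(* (alpha,beta)-weak tractability: n(eps,d) is finite, and
   ln n(eps,d) / (eps^-alpha + d^beta) -> 0 as eps^-1 + d -> infinity,
   eps in (0,1), d in N_+. *)
Definition WT (w : list Z -> R) (S : list Z -> Prop) (alpha beta : R) : Prop :=
  (forall eps d, 0 < eps < 1 -> (1 <= d)%nat -> exists n, IsInfoComp w S d eps n) /\
  forall eta, 0 < eta -> exists M, forall eps d n,
    0 < eps < 1 -> (1 <= d)%nat -> / eps + INR d > M -> IsInfoComp w S d eps n ->
    Rabs (ln (INR n) / (Rpower (/ eps) alpha + Rpower (INR d) beta)) <= eta.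

(* |z|^(2r), with 0^(2r) = 0 (r > 0). *)
Definition pw (z : Z) (r : R) : R :=
  if Z.eqb z 0 then 0 else Rpower (IZR (Z.abs z)) (2 * r).

Fixpoint wsumR (Rs : nat -> R) (j : nat) (k : list Z) : R :=
  match k with nil => 0 | z :: k' => pw z (Rs j) + wsumR Rs (S j) k' end.

(* W_2^R(T^d): weight 1 + sum_{j=1}^d |k_j|^{2R_j}, all frequencies. *)
Definition wR (Rs : nat -> R) (k : list Z) : R := 1 + wsumR Rs 1 k.
Definition SR : list Z -> Prop := fun _ => True.

(* W_2^infty(T^d): frequencies in {-1,0,1}^d, weight 1 + sum_j |k_j|. *)
Fixpoint abssum (k : list Z) : R :=
  match k with nil => 0 | z :: k' => IZR (Z.abs z) + abssum k' end.
Definition wInf (k : list Z) : R := 1 + abssum k.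
Definition SInf (k : list Z) : Prop := Forall (fun z => (-1 <= z <= 1)%Z) k.

(* Main.v *)
Require Import Defs.
From Stdlib Require Import Reals ZArith List Lia Lra Classical FunctionalExtensionality ClassicalEpsilon.
Import ListNotations.
Open Scope R_scope.

Fixpoint fsum (n : nat) (F : nat -> R) : R :=
  match n with O => 0 | S n' => fsum n' F + F n' end.

Lemma fsum_ext n F G : (forall j, (j < n)%nat -> F j = G j) -> fsum n F = fsum n G.
Proof. induction n; simpl; intros H; auto. rewrite IHn by (intros; apply H; lia). rewrite (H n) by lia. auto. Qed.

Lemma fsum_plus n F G : fsum n (fun j => F j + G j) = fsum n F + fsum n G.
Proof. induction n; simpl; [lra|]. rewrite IHn; lra. Qed.

Lemma fsum_scal n a F : fsum n (fun j => a * F j) = a * fsum n F.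
Proof. induction n; simpl; [lra|]. rewrite IHn; lra. Qed.

Lemma fsum_zero n F : (forall j, (j < n)%nat -> F j = 0) -> fsum n F = 0.
Proof. intros H. rewrite (fsum_ext n F (fun _ => 0)) by auto. induction n; simpl; auto. rewrite IHn; try lra. intros; apply H; lia. Qed.

Lemma fsum_first n F : fsum (S n) F = F O + fsum n (fun j => F (S j)).
Proof. induction n; simpl in *; [lra|]. rewrite IHn. lra. Qed.

Lemma fsum_add m n F : fsum (m + n) F = fsum m F + fsum n (fun j => F (m + j)%nat).
Proof. induction n; simpl. rewrite Nat.add_0_r; lra. rewrite Nat.add_succ_r. simpl. rewrite IHn. lra. Qed.

Lemma fsum_delta n l a F : (l < n)%nat -> (forall j, (j < n)%nat -> j <> l -> F j = 0) -> F l = a -> fsum n F = a.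
Proof.
  induction n; intros Hl H Fl; [lia|]. simpl.
  destruct (Nat.eq_dec l n).
  - subst. rewrite fsum_zero. lra. intros; apply H; lia.
  - rewrite IHn; try lia; auto. rewrite H; try lia. lra.
Qed.

Definition skip (j0 j : nat) : nat := if Nat.ltb j j0 then j else S j.
Definition unskip (j0 j : nat) : nat := if Nat.ltb j j0 then j else pred j.

Lemma fsum_skip p F j0 : (j0 < S p)%nat -> fsum (S p) F = F j0 + fsum p (fun j => F (skip j0 j)).
Proof.
  revert j0. induction p; intros j0 Hj.
  - simpl. assert (j0 = O) by lia. subst. lra.
  - destruct (Nat.eq_dec j0 (S p)).
    + subst. change (fsum (S (S p)) F) with (fsum (S p) F + F (S p)).
      rewrite (fsum_ext (S p) (fun j => F (skip (S p) j)) F). lra.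
      intros j Hj'. unfold skip. destruct (Nat.ltb_spec j (S p)); auto; lia.
    + change (fsum (S (S p)) F) with (fsum (S p) F + F (S p)).
      rewrite (IHp j0) by lia. simpl.
      unfold skip at 3. destruct (Nat.ltb_spec p j0); try lia. lra.
Qed.

Lemma skip_lt j0 j p : (j < p)%nat -> (skip j0 j < S p)%nat.
Proof. unfold skip; destruct (Nat.ltb_spec j j0); lia. Qed.
Lemma skip_neq j0 j : skip j0 j <> j0.
Proof. unfold skip; destruct (Nat.ltb_spec j j0); lia. Qed.
Lemma unskip_skip j0 j : unskip j0 (skip j0 j) = j.
Proof. unfold skip, unskip; destruct (Nat.ltb_spec j j0); destruct (Nat.ltb_spec j j0);
  try destruct (Nat.ltb_spec (S j) j0); simpl; lia. Qed.

Lemma dep (T : Type) : forall q p (v u : nat -> T -> R) (C : nat -> nat -> R),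
  (q < p)%nat ->
  (forall j t, (j < p)%nat -> v j t = fsum q (fun i => C j i * u i t)) ->
  exists x : nat -> R, (exists j, (j < p)%nat /\ x j <> 0) /\
     forall t, fsum p (fun j => x j * v j t) = 0.
Proof.
  induction q; intros p v u C Hqp Hv.
  - exists (fun _ => 1). split. exists O. split; [lia|lra].
    intros t. apply fsum_zero. intros j Hj. rewrite Hv by auto. simpl. lra.
  - destruct (classic (exists j0, (j0 < p)%nat /\ C j0 q <> 0)) as [[j0 [Hj0 Hc]]|Hn].
    + destruct p as [|p]; [lia|].
      set (r := fun j => C (skip j0 j) q / C j0 q).
      destruct (IHq p (fun j t => v (skip j0 j) t - r j * v j0 t) u
                  (fun j i => C (skip j0 j) i - r j * C j0 i)) as [y [[j1 [Hj1 Hy]] Hs]].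
      { lia. }
      { intros j t Hj. rewrite !Hv by (try apply skip_lt; auto). simpl.
        rewrite (fsum_ext q (fun i => (C (skip j0 j) i - r j * C j0 i) * u i t) (fun i => C (skip j0 j) i * u i t + (- r j) * (C j0 i * u i t)))
          by (intros; ring).
        rewrite fsum_plus, fsum_scal.
        assert (E: C (skip j0 j) q - r j * C j0 q = 0) by (unfold r; field; auto).
        transitivity (fsum q (fun i => C (skip j0 j) i * u i t) + - r j * fsum q (fun i => C j0 i * u i t)
           + (C (skip j0 j) q - r j * C j0 q) * u q t). simpl. ring. rewrite E. ring. }
      exists (fun j => if Nat.eqb j j0 then - fsum p (fun j' => y j' * r j') else y (unskip j0 j)).
      split.
      * exists (skip j0 j1). split. apply skip_lt; auto.
        destruct (Nat.eqb_spec (skip j0 j1) j0). exfalso; eapply skip_neq; eauto.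
        rewrite unskip_skip. auto.
      * intros t. rewrite (fsum_skip p _ j0 Hj0). rewrite Nat.eqb_refl.
        set (X := - fsum p (fun j' => y j' * r j')).
        rewrite (fsum_ext p (fun j => (if skip j0 j =? j0 then X else y (unskip j0 (skip j0 j))) * v (skip j0 j) t)
          (fun j => y j * (v (skip j0 j) t - r j * v j0 t) + v j0 t * (y j * r j))).
        2: { intros j Hj. destruct (Nat.eqb_spec (skip j0 j) j0). exfalso; eapply skip_neq; eauto.
             rewrite unskip_skip. ring. }
        rewrite fsum_plus, Hs, fsum_scal. unfold X. ring.
    + apply (IHq p v u C). lia. intros j t Hj. rewrite Hv by auto. simpl.
      assert (C j q = 0). { destruct (Req_dec (C j q) 0); auto. exfalso; apply Hn; eauto. }
      rewrite H. ring.
Qed.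

Definition dec := list_eq_dec Z.eq_dec.

Lemma lsum_le f g s : (forall k, In k s -> f k <= g k) -> lsum f s <= lsum g s.
Proof. induction s; simpl; intros H; [lra|]. pose proof (H a (or_introl eq_refl)).
  assert (lsum f s <= lsum g s) by (apply IHs; auto). lra. Qed.

Lemma lsum_scal a f s : lsum (fun k => a * f k) s = a * lsum f s.
Proof. induction s; simpl; [ring|]. rewrite IHs; ring. Qed.

Lemma lsum_nonneg f s : (forall k, In k s -> 0 <= f k) -> 0 <= lsum f s.
Proof. induction s; simpl; intros H; [lra|]. pose proof (H a (or_introl eq_refl)).
  assert (0 <= lsum f s) by (apply IHs; auto). lra. Qed.

Lemma lsum_mem f s k : (forall k, In k s -> 0 <= f k) -> In k s -> f k <= lsum f s.
Proof. induction s; simpl; intros H Hk; [tauto|]. destruct Hk as [<-|Hk].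
  - assert (0 <= lsum f s) by (apply lsum_nonneg; auto). lra.
  - pose proof (H a (or_introl eq_refl)). assert (f k <= lsum f s) by (apply IHs; auto). lra. Qed.

Lemma lsum_remove_le g a L : (forall k, In k L -> 0 <= g k) -> lsum g (remove dec a L) <= lsum g L.
Proof. induction L; simpl; intros H; [lra|]. pose proof (H a0 (or_introl eq_refl)).
  assert (lsum g (remove dec a L) <= lsum g L) by (apply IHL; auto).
  destruct (dec a a0); simpl; lra. Qed.

Lemma lsum_remove g a L : In a L -> (forall k, In k L -> 0 <= g k) ->
  g a + lsum g (remove dec a L) <= lsum g L.
Proof. induction L; simpl; intros Ha H; [tauto|].
  destruct (dec a a0).
  - subst. assert (lsum g (remove dec a0 L) <= lsum g L) by (apply lsum_remove_le; auto). lra.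
  - destruct Ha as [->|Ha]; [tauto|]. simpl.
    assert (g a + lsum g (remove dec a L) <= lsum g L) by (apply IHL; auto). lra. Qed.

Lemma lsum_support g s : NoDup s -> forall L, (forall k, In k L -> 0 <= g k) ->
  (forall k, In k s -> ~ In k L -> g k = 0) -> lsum g s <= lsum g L.
Proof.
  induction s; intros Hs L Hpos Hz; simpl.
  - apply lsum_nonneg; auto.
  - inversion Hs; subst. destruct (in_dec dec a L).
    + assert (lsum g s <= lsum g (remove dec a L)).
      { apply IHs; auto. intros k Hk; apply Hpos. apply (in_remove dec L k a Hk).
        intros k Hk Hn. apply Hz; simpl; auto. intros HL. apply Hn. apply in_in_remove; auto.
        intros ->; auto. }
      pose proof (lsum_remove g a L i Hpos). lra.
    + rewrite (Hz a) by (simpl; auto). assert (lsum g s <= lsum g L) by (apply IHs; auto; intros; apply Hz; simpl; auto). lra.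
Qed.

Lemma cn2_nonneg z : 0 <= cn2 z.
Proof. unfold cn2. nra. Qed.

Lemma inH_support w S d c L : (forall k, 0 <= w k) -> (forall k, In k L -> idx d k /\ S k) ->
  (forall k, ~ In k L -> c k = C0) ->
  inH w S d c /\ sq_le w d c (lsum (fun k => w k * cn2 (c k)) L).
Proof.
  intros Hw HL Hc.
  assert (Hsq : sq_le w d c (lsum (fun k => w k * cn2 (c k)) L)).
  { intros s Hs _. apply lsum_support; auto.
    - intros k _. pose proof (Hw k); pose proof (cn2_nonneg (c k)); nra.
    - intros k _ Hk. rewrite Hc by auto. unfold cn2, C0; simpl. ring_simplify. auto. }
  split; [|exact Hsq]. split; [|eexists; exact Hsq]. intros k Hk. apply Hc. intros Hin. apply Hk, HL, Hin.
Qed.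

Definition bas (k0 : list Z) : Seq := fun k => if dec k k0 then (1, 0) else C0.

Lemma lincomb_restrict f L : NoDup L ->
  lincomb (map f L) (map bas L) = fun k => if in_dec dec k L then f k else C0.
Proof.
  induction L; intros HL; cbn [map lincomb]. apply functional_extensionality; intros k; reflexivity.
  inversion HL; subst. rewrite IHL by auto. apply functional_extensionality. intros k.
  unfold sadd, sscal, bas.
  destruct (in_dec dec k (a :: L)) as [i|i]; destruct (dec k a); destruct (in_dec dec k L);
    try (subst; tauto); try (exfalso; apply i; left; congruence); try (exfalso; apply i; right; assumption).
  all: try (exfalso; destruct i as [i|i]; [congruence|tauto]).
  all: try subst; unfold cadd, cmul, C0.
  all: apply injective_projections; cbn [fst snd]; ring.
Qed.

Lemma upper w S d eps L : (forall k, 0 <= w k) -> 0 < eps -> (forall k, In k L -> idx d k) ->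
  (forall k, idx d k -> S k -> ~ In k L -> 1 <= eps ^ 2 * w k) ->
  e_le w S d (length (nodup dec L)) eps.
Proof.
  intros Hw He HL Hout delta Hd.
  set (L' := nodup dec L).
  assert (HL' : NoDup L') by apply NoDup_nodup.
  assert (HinL : forall k, In k L' <-> In k L) by (intros; apply nodup_In).
  exists (fun f => fun k => if in_dec dec k L' then f k else C0), (map bas L').
  split; [apply length_map|]. split; [|split; [|split; [|split]]].
  - intros g Hg. apply in_map_iff in Hg. destruct Hg as [k0 [<- Hk0]].
    apply (inH_support one (fun _ => True) d (bas k0) [k0]).
    + intros; unfold one; lra.
    + intros k [<-|[]]. split; auto. apply HL, HinL; auto.
    + intros k Hk. unfold bas. destruct (dec k k0); auto. subst; simpl in Hk; tauto.
  - intros f g _ _. apply functional_extensionality; intros k. unfold sadd.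
    destruct (in_dec dec k L'); auto. unfold cadd, C0; simpl; f_equal; ring.
  - intros a f _. apply functional_extensionality; intros k. unfold sscal.
    destruct (in_dec dec k L'); auto. unfold cmul, C0; simpl; f_equal; ring.
  - intros f _. exists (map f L'). split; [apply length_map|]. symmetry; apply lincomb_restrict; auto.
  - intros f M [Hsupp _] Hf s Hs Hsidx.
    assert (HM : 0 <= M) by (apply (Hf nil); [constructor|simpl; tauto]).
    apply Rle_trans with (lsum (fun k => eps ^ 2 * (w k * cn2 (f k))) s).
    + apply lsum_le. intros k Hk. unfold one, ssub.
      pose proof (cn2_nonneg (f k)); pose proof (Hw k).
      destruct (in_dec dec k L').
      * destruct (f k) as [x y]. unfold cadd, cneg, cn2; simpl.
        replace (x + - x) with 0 by ring. replace (y + - y) with 0 by ring.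
        assert (0 <= eps ^ 2 * (w k * (x * x + y * y))). { apply Rmult_le_pos. nra.
          apply Rmult_le_pos; nra. } nra.
      * assert (E : cn2 (cadd (f k) (cneg C0)) = cn2 (f k)).
        { destruct (f k); unfold cadd, cneg, C0, cn2; simpl. ring. }
        rewrite E.
        destruct (classic (S k)) as [HS|HS].
        -- assert (1 <= eps ^ 2 * w k). { apply Hout; auto. rewrite <- HinL; auto. }
           nra.
        -- rewrite (Hsupp k) by tauto. unfold cn2, C0; simpl. nra.
    + rewrite lsum_scal. pose proof (Hf s Hs Hsidx).
      assert (eps ^ 2 <= (eps + delta) ^ 2) by nra. nra.
Qed.

Definition comp (b : bool) (z : Cx) : R := if b then fst z else snd z.
Definition posi N j := if Nat.ltb j N then j else (j - N)%nat.
Definition vali N j : Cx := if Nat.ltb j N then (1,0) else (0,1).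
Definition Eb (L : list (list Z)) j : Seq :=
  fun k => if dec k (nth (posi (length L) j) L nil) then vali (length L) j else C0.
Fixpoint fsumS (n : nat) (F : nat -> Seq) : Seq :=
  match n with O => fun _ => C0 | S n' => sadd (fsumS n' F) (F n') end.

Lemma comp_cadd b x y : comp b (cadd x y) = comp b x + comp b y.
Proof. destruct b; reflexivity. Qed.
Lemma comp_C0 b : comp b C0 = 0.
Proof. destruct b; reflexivity. Qed.
Lemma comp_cmul b c z : comp b (cmul c z) = fst c * comp b z + snd c * comp b (cmul (0,1) z).
Proof. destruct b, c, z; unfold comp, cmul; simpl; ring. Qed.
Lemma comp_cmul_real b x z : comp b (cmul (x, 0) z) = x * comp b z.
Proof. destruct b, z; unfold comp, cmul; simpl; ring. Qed.
Lemma comp_eq z : (forall b, comp b z = 0) -> z = C0.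
Proof. intros H. pose proof (H true); pose proof (H false). destruct z; unfold comp, C0 in *; simpl in *; subst; auto. Qed.

Lemma comp_fsumS b n F k : comp b (fsumS n F k) = fsum n (fun j => comp b (F j k)).
Proof. induction n; simpl. apply comp_C0. unfold sadd. rewrite comp_cadd, IHn. auto. Qed.

Lemma fsumS_zero n F k : (forall j, (j < n)%nat -> F j k = C0) -> fsumS n F k = C0.
Proof. intros H. apply comp_eq. intros b. rewrite comp_fsumS. apply fsum_zero. intros j Hj.
  rewrite H by auto. apply comp_C0. Qed.

Lemma lincomb_fsum b k : forall cs gs, length cs = length gs ->
  comp b (lincomb cs gs k) = fsum (length cs) (fun i => comp b (cmul (nth i cs C0) (nth i gs (fun _ => C0) k))).
Proof.
  induction cs; intros gs Hl; destruct gs; cbn [length lincomb] in *; try lia.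
  - apply comp_C0.
  - unfold sadd, sscal. rewrite comp_cadd. rewrite (IHcs gs) by lia.
    rewrite fsum_first. cbn [nth]. ring.
Qed.

Lemma lsum_ext f g s : (forall k, In k s -> f k = g k) -> lsum f s = lsum g s.
Proof. intros H. apply Rle_antisym; apply lsum_le; intros k Hk; rewrite H; auto; lra. Qed.

Lemma cn2_comp z b : (comp b z) ^ 2 <= cn2 z.
Proof. destruct b, z; unfold comp, cn2; simpl; nra. Qed.

Lemma lower w S d m eps delta W L : (forall k, 0 <= w k) -> NoDup L ->
  (forall k, In k L -> idx d k /\ S k /\ w k <= W) -> 0 < delta ->
  (eps + delta) ^ 2 * W < 1 -> (m < length L)%nat -> ~ e_le w S d m eps.
Proof.
  intros Hw HL HLk Hd HW Hm He.
  destruct (He delta Hd) as [A [gs [Hlen [HgL2 [Hadd [Hsc [Hspan Herr]]]]]]].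
  set (N := length L) in *.
  assert (HLk' : forall k, In k L -> idx d k /\ S k) by (intros k Hk; destruct (HLk k Hk); tauto).
  assert (HposL : forall j, (j < N + N)%nat -> In (nth (posi N j) L nil) L).
  { intros j Hj. apply nth_In. unfold posi. destruct (Nat.ltb_spec j N); lia. }
  assert (HEsupp : forall j, (j < N + N)%nat -> forall k, ~ In k L -> Eb L j k = C0).
  { intros j Hj k Hk. unfold Eb. destruct (dec k _); auto. subst. exfalso. apply Hk. apply HposL; auto. }
  assert (HEinH : forall j, (j < N + N)%nat -> inH w S d (Eb L j)).
  { intros j Hj. apply (inH_support w S d (Eb L j) L Hw HLk'). apply HEsupp; auto. }
  set (cs := fun j => epsilon (inhabits nil) (fun cs => length cs = m /\ A (Eb L j) = lincomb cs gs)).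
  assert (Hcs : forall j, (j < N + N)%nat -> length (cs j) = m /\ A (Eb L j) = lincomb (cs j) gs).
  { intros j Hj. unfold cs. apply epsilon_spec. apply Hspan. apply HEinH; auto. }
  set (g0 := fun _ : list Z => C0).
  destruct (dep (list Z * bool) (m + m) (N + N)
     (fun j t => comp (snd t) (A (Eb L j) (fst t)))
     (fun i t => if Nat.ltb i m then comp (snd t) (nth i gs g0 (fst t))
                 else comp (snd t) (cmul (0,1) (nth (i - m) gs g0 (fst t))))
     (fun j i => if Nat.ltb i m then fst (nth i (cs j) C0) else snd (nth (i - m) (cs j) C0)))
    as [x [[j0 [Hj0 Hx0]] Hx]].
  { lia. }
  { intros j [k b] Hj. simpl. destruct (Hcs j Hj) as [Hl Heq]. rewrite Heq.
    rewrite lincomb_fsum by lia. rewrite Hl. rewrite fsum_add.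
    rewrite <- fsum_plus. apply fsum_ext. intros i Hi.
    destruct (Nat.ltb_spec i m); [|lia]. destruct (Nat.ltb_spec (m + i) m); [lia|].
    replace (m + i - m)%nat with i by lia. rewrite comp_cmul. reflexivity. }
  set (F := fun j => sscal (x j, 0) (Eb L j)).
  set (f := fsumS (N + N) F).
  assert (HFsupp : forall n, (n <= N + N)%nat -> forall k, ~ In k L -> fsumS n F k = C0).
  { intros n Hn k Hk. apply fsumS_zero. intros j Hj. unfold F, sscal. rewrite HEsupp by (auto; lia).
    unfold cmul, C0; simpl; f_equal; ring. }
  assert (HFinH : forall n, (n <= N + N)%nat -> inH w S d (fsumS n F)).
  { intros n Hn. apply (inH_support w S d _ L Hw HLk'). apply HFsupp; auto. }
  assert (HA0 : A (fun _ => C0) = (fun _ => C0)).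
  { assert (inH w S d (fun _ => C0)) by (apply (HFinH O); lia).
    replace (fun _ : list Z => C0) with (sscal C0 (fun _ : list Z => C0)) at 1.
    rewrite Hsc by auto. apply functional_extensionality; intros k. unfold sscal, cmul, C0; simpl; f_equal; ring.
    apply functional_extensionality; intros k. unfold sscal, cmul, C0; simpl; f_equal; ring. }
  assert (HAf : forall n, (n <= N + N)%nat -> A (fsumS n F) = fsumS n (fun j => sscal (x j, 0) (A (Eb L j)))).
  { induction n; intros Hn. simpl. apply HA0.
    simpl. rewrite Hadd. rewrite IHn by lia. unfold F. rewrite Hsc. reflexivity.
    apply HEinH; lia. apply HFinH; lia. unfold F. apply (inH_support w S d _ L Hw HLk').
    intros k Hk. unfold sscal. rewrite HEsupp by (auto; lia). unfold cmul, C0; simpl; f_equal; ring. }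
  assert (HAfz : forall k b, comp b (A f k) = 0).
  { intros k b. unfold f. rewrite HAf by lia. rewrite comp_fsumS.
    transitivity (fsum (N + N) (fun j => x j * comp b (A (Eb L j) k))).
    apply fsum_ext. intros j Hj. unfold sscal. rewrite comp_cmul_real. reflexivity.
    exact (Hx (k, b)). }
  destruct (inH_support w S d f L Hw HLk') as [HfH Hfsq].
  { apply HFsupp; lia. }
  pose proof (Herr f _ HfH Hfsq L HL (fun k Hk => proj1 (HLk' k Hk))) as Hb.
  set (Q := lsum (fun k => cn2 (f k)) L).
  assert (HQ1 : lsum (fun k => one k * cn2 (ssub f (A f) k)) L = Q).
  { apply lsum_ext. intros k _. unfold one, ssub. 
    assert (H1 := HAfz k true); assert (H2 := HAfz k false). unfold comp in H1, H2.
    destruct (A f k) as [p q]; destruct (f k) as [r s]; simpl in *; subst. unfold cadd, cneg, cn2; simpl. ring. }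
  assert (HQ2 : lsum (fun k => w k * cn2 (f k)) L <= W * Q).
  { unfold Q. rewrite <- lsum_scal. apply lsum_le. intros k Hk. destruct (HLk k Hk) as [_ [_ Hwk]].
    pose proof (cn2_nonneg (f k)). nra. }
  set (l := posi N j0).
  set (b0 := Nat.ltb j0 N).
  assert (Hl : (l < N)%nat) by (unfold l, posi; destruct (Nat.ltb_spec j0 N); lia).
  assert (Hcomp : comp b0 (f (nth l L nil)) = x j0).
  { unfold f. rewrite comp_fsumS. apply (fsum_delta _ j0); auto.
    - intros j Hj Hne. unfold F, sscal. rewrite comp_cmul_real. unfold Eb.
      destruct (dec (nth l L nil) (nth (posi (length L) j) L nil)) as [e|e].
      + pose proof (proj1 (NoDup_nth L nil) HL l (posi (length L) j)) as E.
        change (length L) with N in E, e |- *.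
        apply E in e; auto.
        2: { unfold posi; destruct (Nat.ltb_spec j N); lia. }
        unfold l, posi, vali, b0 in *.
        destruct (Nat.ltb_spec j0 N); destruct (Nat.ltb_spec j N); try lia; simpl; ring.
      + rewrite comp_C0; ring.
    - unfold F, sscal. rewrite comp_cmul_real. unfold Eb. change (length L) with N. fold l.
      destruct (dec (nth l L nil) (nth l L nil)); [|tauto].
      unfold vali, b0. destruct (Nat.ltb j0 N); simpl; ring. }
  assert (HQpos : 0 < Q).
  { apply Rlt_le_trans with (cn2 (f (nth l L nil))).
    - pose proof (cn2_comp (f (nth l L nil)) b0). rewrite Hcomp in H.
      assert (0 < x j0 ^ 2) by (pose proof (Rsqr_pos_lt (x j0) Hx0) as Hs; unfold Rsqr in Hs; simpl; nra).
      lra.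
    - unfold Q. apply (lsum_mem (fun k => cn2 (f k))). intros; apply cn2_nonneg. apply nth_In; auto. }
  rewrite HQ1 in Hb.
  assert (0 <= (eps + delta) ^ 2) by (apply pow2_ge_0).
  assert (Q <= (eps + delta) ^ 2 * W * Q) by nra.
  nra.
Qed.

Local Open Scope nat_scope.

Definition zr (B : nat) : list Z := map (fun i => (Z.of_nat i - Z.of_nat B)%Z) (seq 0 (2 * B + 1)).

Lemma zr_length B : length (zr B) = (2 * B + 1)%nat.
Proof. unfold zr. rewrite length_map, length_seq. auto. Qed.

Lemma zr_in B z : (Z.abs z <= Z.of_nat B)%Z -> In z (zr B).
Proof. intros H. unfold zr. apply in_map_iff. exists (Z.to_nat (z + Z.of_nat B)).
  split. rewrite Z2Nat.id by lia. lia. apply in_seq. lia. Qed.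

Fixpoint box (B d : nat) : list (list Z) :=
  match d with O => [nil] | S d' => flat_map (fun z => map (cons z) (box B d')) (zr B) end.

Lemma box_length B d : length (box B d) = ((2 * B + 1) ^ d)%nat.
Proof. induction d; simpl; auto. rewrite (flat_map_constant_length (c := length (box B d))).
  rewrite zr_length, IHd. auto. intros; apply length_map. Qed.

Lemma box_elem B d k : In k (box B d) -> length k = d.
Proof. revert k; induction d; simpl; intros k H. destruct H as [<-|[]]; auto.
  apply in_flat_map in H. destruct H as [z [_ H]]. apply in_map_iff in H. destruct H as [k' [<- H]].
  simpl; f_equal; auto. Qed.

Lemma box_in B d k : length k = d -> Forall (fun z => (Z.abs z <= Z.of_nat B)%Z) k -> In k (box B d).
Proof. revert k; induction d; intros k Hl Hf; destruct k; simpl in *; try lia; auto.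
  inversion Hf; subst. apply in_flat_map. exists z. split. apply zr_in; auto.
  apply in_map. apply IHd; auto. Qed.

Fixpoint nnz (k : list Z) : nat :=
  match k with nil => O | z :: k' => ((if Z.eqb z 0 then 0 else 1) + nnz k')%nat end.

Fixpoint sp (B d t : nat) : list (list Z) :=
  match d with
  | O => [nil]
  | S d' => map (cons 0%Z) (sp B d' t) ++
      match t with O => nil | S t' => flat_map (fun z => map (cons z) (sp B d' t')) (zr B) end
  end.

Lemma sp_elem B d t k : In k (sp B d t) -> length k = d.
Proof. revert t k; induction d; simpl; intros t k H. destruct H as [<-|[]]; auto.
  apply in_app_or in H. destruct H as [H|H].
  - apply in_map_iff in H. destruct H as [k' [<- H]]. simpl; f_equal; eauto.
  - destruct t; [destruct H|]. apply in_flat_map in H. destruct H as [z [_ H]].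
    apply in_map_iff in H. destruct H as [k' [<- H]]. simpl; f_equal; eauto. Qed.

Lemma sp_in B d t k : length k = d -> Forall (fun z => (Z.abs z <= Z.of_nat B)%Z) k -> (nnz k <= t)%nat ->
  In k (sp B d t).
Proof. revert t k; induction d; intros t k Hl Hf Hn; destruct k as [|z k]; simpl in *; try lia; auto.
  inversion Hf; subst. apply in_or_app. destruct (Z.eqb_spec z 0).
  - subst. left. apply in_map. apply IHd; auto.
  - right. destruct t; [lia|]. apply in_flat_map. exists z. split. apply zr_in; auto.
    apply in_map. apply IHd; auto. lia. Qed.

Lemma sp_length B d t : (length (sp B d t) <= ((2 * B + 1) * (d + 1)) ^ t)%nat.
Proof.
  revert t; induction d; intros t; simpl.
  - match goal with |- (_ <= ?X)%nat => assert (X <> 0)%nat by (apply Nat.pow_nonzero; lia) end. lia.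
  - rewrite length_app, length_map. destruct t.
    + simpl. specialize (IHd O). simpl in IHd. lia.
    + rewrite (flat_map_constant_length (c := length (sp B d t))) by (intros; apply length_map).
      rewrite zr_length. pose proof (IHd (S t)). pose proof (IHd t).
      set (a := (2 * B + 1)%nat) in *.
      assert (((a * (d + 1)) ^ t <= (a * (S d + 1)) ^ t)%nat) by (apply Nat.pow_le_mono_l; nia).
      rewrite Nat.pow_succ_r' in *. 
      set (P := ((a * (d + 1)) ^ t)%nat) in *. set (Q := ((a * (S d + 1)) ^ t)%nat) in *.
      assert (a * (d + 1) * P + a * P <= a * (S d + 1) * Q)%nat by (replace (a * (d + 1) * P + a * P)%nat with (a * (S d + 1) * P)%nat by ring;
             apply Nat.mul_le_mono_l; auto).
      change ((B + (B + 0) + 1) * S (d + 1) * ((B + (B + 0) + 1) * S (d + 1)) ^ t)%nat with (a * (S d + 1) * Q)%nat.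
      assert (a * length (sp B d t) <= a * P)%nat by (apply Nat.mul_le_mono_l; auto).
      lia.
Qed.

Fixpoint bin (d : nat) : list (list Z) :=
  match d with O => [nil] | S d' => map (cons 0%Z) (bin d') ++ map (cons 1%Z) (bin d') end.

Lemma bin_length d : length (bin d) = (2 ^ d)%nat.
Proof. induction d; simpl; auto. rewrite length_app, !length_map, IHd. lia. Qed.

Lemma bin_elem d k : In k (bin d) -> length k = d /\ Forall (fun z => z = 0%Z \/ z = 1%Z) k.
Proof. revert k; induction d; simpl; intros k H. destruct H as [<-|[]]; auto.
  apply in_app_or in H. destruct H as [H|H]; apply in_map_iff in H; destruct H as [k' [<- H]];
  destruct (IHd k' H); simpl; split; auto. Qed.

Lemma NoDup_map_cons (z : Z) l : NoDup l -> NoDup (map (cons z) l).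
Proof. induction l; simpl; intros H; constructor; inversion H; subst; auto.
  intros Hin. apply in_map_iff in Hin. destruct Hin as [x [Hx Hx']]. inversion Hx; subst; auto. Qed.

Lemma bin_NoDup d : NoDup (bin d).
Proof. induction d; simpl. constructor; auto. constructor.
  apply NoDup_app; try apply NoDup_map_cons; auto.
  intros a H1 H2. apply in_map_iff in H1, H2. destruct H1 as [x [<- _]]. destruct H2 as [y [Hy _]].
  inversion Hy. Qed.

Local Open Scope R_scope.

Lemma exp_le x y : x <= y -> exp x <= exp y.
Proof. intros [H|H]. left; apply exp_increasing; auto. subst; lra. Qed.

Lemma exp_sq_bound y : 0 <= y -> y ^ 2 / 4 <= exp y.
Proof.
  intros Hy. replace y with (y/2 + y/2) at 2 by field. rewrite exp_plus.
  pose proof (exp_ineq1_le (y/2)). nra.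
Qed.

Lemma growth k1 k2 kap eta : 0 <= k1 -> 0 <= k2 -> 0 < kap -> 0 < eta ->
  exists T, 0 <= T /\ forall s, T <= s -> k1 + k2 * s <= eta * exp (kap * s).
Proof.
  intros H1 H2 Hk He.
  set (T := Rmax 1 (4 * (k1 + k2) / (eta * kap ^ 2))).
  exists T. split. unfold T; pose proof (Rmax_l 1 (4 * (k1 + k2) / (eta * kap ^ 2))); lra.
  intros s Hs.
  assert (Hs1 : 1 <= s) by (pose proof (Rmax_l 1 (4 * (k1 + k2) / (eta * kap ^ 2))); unfold T in Hs; lra).
  assert (Hs2 : 4 * (k1 + k2) / (eta * kap ^ 2) <= s) by (pose proof (Rmax_r 1 (4 * (k1 + k2) / (eta * kap ^ 2))); unfold T in Hs; lra).
  assert (Hek : 0 < eta * kap ^ 2) by (apply Rmult_lt_0_compat; auto; apply pow_lt; auto).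
  assert (Hs3 : 4 * (k1 + k2) <= s * (eta * kap ^ 2)).
  { apply Rmult_le_compat_r with (r := eta * kap ^ 2) in Hs2; [|lra].
    unfold Rdiv in Hs2. rewrite Rmult_assoc, Rinv_l in Hs2 by lra. lra. }
  pose proof (exp_sq_bound (kap * s)). assert (0 <= kap * s) by nra.
  specialize (H H0).
  assert (k1 + k2 * s <= (k1 + k2) * s) by nra.
  assert ((k1 + k2) * s <= eta * ((kap * s) ^ 2 / 4)).
  { replace (eta * ((kap * s) ^ 2 / 4)) with (s * (s * (eta * kap ^ 2)) / 4) by (simpl; field).
    nra. }
  nra.
Qed.

Lemma div_le_eta Ln D eta : 0 < D -> Ln <= eta * D -> Ln / D <= eta.
Proof. intros HD H. unfold Rdiv. apply Rmult_le_reg_r with D; auto.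
  rewrite Rmult_assoc, Rinv_l by lra. lra. Qed.

Lemma analysis alpha beta c eta : 0 < alpha -> 0 < beta -> 0 < c -> 0 < eta ->
  (alpha > 2 \/ beta > 1) ->
  exists M, forall a b Ln, 0 <= a -> 0 <= b -> exp a + exp b > M -> 0 <= Ln ->
    Ln <= exp b * (ln 5 + a / c) ->
    Ln <= 2 * exp (2 * a) * (ln 10 + a / c + b) ->
    Ln / (exp (alpha * a) + exp (beta * b)) <= eta.
Proof.
  intros Ha Hb Hc He Hcase.
  assert (Hl5 : 0 <= ln 5) by (rewrite <- ln_1; left; apply ln_increasing; lra).
  assert (Hl10 : 0 <= ln 10) by (rewrite <- ln_1; left; apply ln_increasing; lra).
  assert (Hic : 0 < / c) by (apply Rinv_0_lt_compat; auto).
  destruct Hcase as [Hal|Hbe].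
  -
    destruct (growth (ln 10) (/ c + alpha / beta) (alpha - 2) (eta / 2)) as [T3 [HT3 G3]]; try lra.
    { assert (0 < alpha / beta) by (apply Rdiv_lt_0_compat; auto). lra. }
    destruct (growth (ln 10) (beta / (alpha * c) + 1) (beta - 2 * beta / alpha) (eta / 2)) as [T4 [HT4 G4]]; try lra.
    { assert (0 < beta / (alpha * c)) by (apply Rdiv_lt_0_compat; nra). lra. }
    { assert (2 * beta / alpha < beta). { apply Rmult_lt_reg_r with alpha; auto. unfold Rdiv.
        rewrite Rmult_assoc, Rinv_l by lra. nra. } lra. }
    exists (exp T3 + exp (alpha * T3 / beta) + exp (beta * T4 / alpha) + exp T4).
    intros a b Ln Ha0 Hb0 HM HL0 HL1 HL2.
    assert (HD : 0 < exp (alpha * a) + exp (beta * b)) by (pose proof (exp_pos (alpha * a)); pose proof (exp_pos (beta * b)); lra).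
    apply div_le_eta; auto.
    pose proof (exp_pos T3); pose proof (exp_pos T4); pose proof (exp_pos (alpha * T3 / beta)); pose proof (exp_pos (beta * T4 / alpha)).
    destruct (Rle_or_lt (beta * b) (alpha * a)) as [Hab|Hab].
    + assert (Hb' : b <= alpha * a / beta).
      { apply Rmult_le_reg_l with beta; auto. unfold Rdiv. rewrite <- Rmult_assoc, (Rmult_comm beta (alpha * a)), Rmult_assoc, Rinv_r by lra. lra. }
      assert (HaT : T3 <= a).
      { destruct (Rle_or_lt T3 a) as [h|h]; auto. exfalso.
        assert (exp a < exp T3) by (apply exp_increasing; auto).
        assert (exp b < exp (alpha * T3 / beta)).
        { apply exp_increasing. apply Rle_lt_trans with (alpha * a / beta); auto.
          unfold Rdiv. apply Rmult_lt_compat_r. apply Rinv_0_lt_compat; auto. nra. }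
        lra. }
      specialize (G3 a HaT).
      assert (E : exp (alpha * a) = exp (2 * a) * exp ((alpha - 2) * a)) by (rewrite <- exp_plus; f_equal; ring).
      assert (a / c + b <= (/ c + alpha / beta) * a).
      { unfold Rdiv in *. nra. }
      pose proof (exp_pos (2 * a)). pose proof (exp_pos (beta * b)).
      assert (Ln <= 2 * exp (2 * a) * ((eta / 2) * exp ((alpha - 2) * a))) by nra.
      rewrite E. nra.
    + assert (Ha' : a < beta * b / alpha).
      { apply Rmult_lt_reg_l with alpha; auto. unfold Rdiv. rewrite <- Rmult_assoc, (Rmult_comm alpha (beta * b)), Rmult_assoc, Rinv_r by lra. lra. }
      assert (HbT : T4 <= b).
      { destruct (Rle_or_lt T4 b) as [h|h]; auto. exfalso.
        assert (exp b < exp T4) by (apply exp_increasing; auto).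
        assert (exp a < exp (beta * T4 / alpha)).
        { apply exp_increasing. apply Rlt_trans with (beta * b / alpha); auto.
          unfold Rdiv. apply Rmult_lt_compat_r. apply Rinv_0_lt_compat; auto. nra. }
        lra. }
      specialize (G4 b HbT).
      assert (E : exp (beta * b) = exp (2 * beta * b / alpha) * exp ((beta - 2 * beta / alpha) * b))
        by (rewrite <- exp_plus; f_equal; field; lra).
      assert (E2 : exp (2 * a) <= exp (2 * beta * b / alpha)).
      { apply exp_le. replace (2 * beta * b / alpha) with (2 * (beta * b / alpha)) by (field; lra). lra. }
      assert (a / c + b <= (beta / (alpha * c) + 1) * b).
      { replace ((beta / (alpha * c) + 1) * b) with ((beta * b / alpha) / c + b) by (field; lra).
        unfold Rdiv. apply Rplus_le_compat_r. apply Rmult_le_compat_r; [lra|]. unfold Rdiv in Ha'. lra. }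
      pose proof (exp_pos (2 * a)). pose proof (exp_pos (alpha * a)).
      pose proof (exp_pos (2 * beta * b / alpha)).
      assert (0 <= ln 10 + a / c + b) by (unfold Rdiv; nra).
      assert (Ln <= 2 * exp (2 * beta * b / alpha) * (ln 10 + a / c + b)) by nra.
      assert (Ln <= 2 * exp (2 * beta * b / alpha) * ((eta / 2) * exp ((beta - 2 * beta / alpha) * b))) by nra.
      rewrite E. nra.
  -
    destruct (growth (ln 5) (beta / (alpha * c)) (beta - 1) eta) as [T1 [HT1 G1]]; try lra.
    { left; apply Rdiv_lt_0_compat; nra. }
    destruct (growth (ln 5) (/ c) (alpha - alpha / beta) eta) as [T2 [HT2 G2]]; try lra.
    { assert (alpha / beta < alpha). { apply Rmult_lt_reg_r with beta; auto. unfold Rdiv.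
        rewrite Rmult_assoc, Rinv_l by lra. nra. } lra. }
    exists (exp T1 + exp (beta * T1 / alpha) + exp (alpha * T2 / beta) + exp T2).
    intros a b Ln Ha0 Hb0 HM HL0 HL1 HL2.
    assert (HD : 0 < exp (alpha * a) + exp (beta * b)) by (pose proof (exp_pos (alpha * a)); pose proof (exp_pos (beta * b)); lra).
    apply div_le_eta; auto.
    pose proof (exp_pos T1); pose proof (exp_pos T2); pose proof (exp_pos (beta * T1 / alpha)); pose proof (exp_pos (alpha * T2 / beta)).
    destruct (Rle_or_lt (alpha * a) (beta * b)) as [Hab|Hab].
    + assert (Ha' : a <= beta * b / alpha).
      { apply Rmult_le_reg_l with alpha; auto. unfold Rdiv. rewrite <- Rmult_assoc, (Rmult_comm alpha (beta * b)), Rmult_assoc, Rinv_r by lra. lra. }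
      assert (HbT : T1 <= b).
      { destruct (Rle_or_lt T1 b) as [h|h]; auto. exfalso.
        assert (exp b < exp T1) by (apply exp_increasing; auto).
        assert (exp a < exp (beta * T1 / alpha)).
        { apply exp_increasing. apply Rle_lt_trans with (beta * b / alpha); auto.
          unfold Rdiv. apply Rmult_lt_compat_r. apply Rinv_0_lt_compat; auto. nra. }
        lra. }
      specialize (G1 b HbT).
      assert (E : exp (beta * b) = exp b * exp ((beta - 1) * b)) by (rewrite <- exp_plus; f_equal; ring).
      assert (a / c <= beta / (alpha * c) * b).
      { replace (beta / (alpha * c) * b) with ((beta * b / alpha) / c) by (field; lra).
        unfold Rdiv. apply Rmult_le_compat_r; [lra|]. unfold Rdiv in Ha'. lra. }
      pose proof (exp_pos b). pose proof (exp_pos (alpha * a)).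
      assert (Ln <= exp b * (eta * exp ((beta - 1) * b))) by nra.
      rewrite E. nra.
    + assert (Hb' : b < alpha * a / beta).
      { apply Rmult_lt_reg_l with beta; auto. unfold Rdiv. rewrite <- Rmult_assoc, (Rmult_comm beta (alpha * a)), Rmult_assoc, Rinv_r by lra. lra. }
      assert (HaT : T2 <= a).
      { destruct (Rle_or_lt T2 a) as [h|h]; auto. exfalso.
        assert (exp a < exp T2) by (apply exp_increasing; auto).
        assert (exp b < exp (alpha * T2 / beta)).
        { apply exp_increasing. apply Rlt_trans with (alpha * a / beta); auto.
          unfold Rdiv. apply Rmult_lt_compat_r. apply Rinv_0_lt_compat; auto. nra. }
        lra. }
      specialize (G2 a HaT).
      assert (E : exp (alpha * a) = exp (alpha * a / beta) * exp ((alpha - alpha / beta) * a))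
        by (rewrite <- exp_plus; f_equal; field; lra).
      assert (E2 : exp b <= exp (alpha * a / beta)) by (apply exp_le; lra).
      pose proof (exp_pos b). pose proof (exp_pos (beta * b)). pose proof (exp_pos (alpha * a / beta)).
      assert (0 <= ln 5 + a / c) by (unfold Rdiv; nra).
      assert (Ln <= exp (alpha * a / beta) * (ln 5 + a / c)) by nra.
      assert (Ln <= exp (alpha * a / beta) * (eta * exp ((alpha - alpha / beta) * a))) by (unfold Rdiv in *; nra).
      rewrite E. nra.
Qed.

Lemma ln_le' x y : 0 < x -> x <= y -> ln x <= ln y.
Proof. intros Hx [H|H]. left; apply ln_increasing; auto. subst; lra. Qed.

Lemma ln_INR_nonneg n : 0 <= ln (INR n).
Proof. destruct n. change (INR 0) with 0. unfold ln. destruct (Rlt_dec 0 0) as [r|r]; [exfalso; apply (Rlt_irrefl 0 r)|apply Rle_refl].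
  rewrite <- ln_1. apply ln_le'. lra. rewrite S_INR. pose proof (pos_INR n). lra. Qed.

Lemma ln_nat_le n N : (1 <= N)%nat -> (n <= N)%nat -> ln (INR n) <= ln (INR N).
Proof. intros H1 H2. destruct n.
  - change (INR 0) with 0. replace (ln 0) with 0.
    2: { unfold ln. destruct (Rlt_dec 0 0) as [r|r]; [exfalso; apply (Rlt_irrefl 0 r)|reflexivity]. }
    rewrite <- ln_1. apply ln_le'. lra. apply (le_INR 1); auto.
  - apply ln_le'. rewrite S_INR; pose proof (pos_INR n); lra. apply le_INR; auto. Qed.

Lemma minimize (P : nat -> Prop) N : P N -> exists n, P n /\ forall m, (m < n)%nat -> ~ P m.
Proof.
  induction N as [N IH] using (well_founded_induction lt_wf). intros HN.
  destruct (classic (exists m, (m < N)%nat /\ P m)) as [[m [Hm Pm]]|Hn].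
  - apply (IH m Hm Pm).
  - exists N. split; auto. intros m Hm Pm. apply Hn; eauto.
Qed.

Lemma gen_bounds w S d eps B t : (forall k, 0 <= w k) -> 0 < eps ->
  (forall k, idx d k -> S k -> eps ^ 2 * w k < 1 ->
     Forall (fun z => (Z.abs z <= Z.of_nat B)%Z) k /\ (nnz k <= t)%nat) ->
  (exists n, IsInfoComp w S d eps n) /\
  forall n, IsInfoComp w S d eps n -> (n <= (2 * B + 1) ^ d)%nat /\ (n <= ((2 * B + 1) * (d + 1)) ^ t)%nat.
Proof.
  intros Hw He Hk.
  assert (H1 : e_le w S d (length (nodup dec (box B d))) eps).
  { apply upper; auto. intros k Hk'. apply box_elem in Hk'. auto.
    intros k Hi HS Hn. destruct (Rle_or_lt 1 (eps ^ 2 * w k)) as [h|h]; auto.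
    exfalso. apply Hn. destruct (Hk k Hi HS h). apply box_in; auto. }
  assert (H2 : e_le w S d (length (nodup dec (sp B d t))) eps).
  { apply upper; auto. intros k Hk'. apply sp_elem in Hk'. auto.
    intros k Hi HS Hn. destruct (Rle_or_lt 1 (eps ^ 2 * w k)) as [h|h]; auto.
    exfalso. apply Hn. destruct (Hk k Hi HS h). apply sp_in; auto. }
  assert (L1 : (length (nodup dec (box B d)) <= (2 * B + 1) ^ d)%nat).
  { rewrite <- box_length. apply NoDup_incl_length. apply NoDup_nodup. intros x Hx; apply nodup_In in Hx; auto. }
  assert (L2 : (length (nodup dec (sp B d t)) <= ((2 * B + 1) * (d + 1)) ^ t)%nat).
  { eapply Nat.le_trans; [|apply sp_length]. apply NoDup_incl_length. apply NoDup_nodup. intros x Hx; apply nodup_In in Hx; auto. }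
  split.
  - destruct (minimize (fun m => e_le w S d m eps) _ H1) as [n Hn]. exists n. exact Hn.
  - intros n [_ Hmin]. split.
    + destruct (Nat.le_gt_cases n (length (nodup dec (box B d)))). lia. exfalso; eapply Hmin; eauto.
    + destruct (Nat.le_gt_cases n (length (nodup dec (sp B d t)))). lia. exfalso; eapply Hmin; eauto.
Qed.

Definition Bounds (w : list Z -> R) (S : list Z -> Prop) (c : R) : Prop :=
  forall eps d n, 0 < eps < 1 -> (1 <= d)%nat -> IsInfoComp w S d eps n ->
    ln (INR n) <= INR d * (ln 5 + ln (/ eps) / c) /\
    ln (INR n) <= 2 * exp (2 * ln (/ eps)) * (ln 10 + ln (/ eps) / c + ln (INR d)).

Lemma ln_inv_eps_nonneg eps : 0 < eps < 1 -> 0 <= ln (/ eps).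
Proof. intros He. rewrite <- ln_1. apply ln_le'. lra.
  rewrite <- Rinv_1. apply Rinv_le_contravar; lra. Qed.

Lemma exp2a eps : 0 < eps -> exp (2 * ln (/ eps)) = / eps ^ 2.
Proof. intros He. replace (2 * ln (/ eps)) with (ln (/ eps) + ln (/ eps)) by ring.
  rewrite exp_plus, exp_ln by (apply Rinv_0_lt_compat; auto). simpl. field. lra. Qed.

Lemma bounds_from_B w S c eps d B t : (forall k, 0 <= w k) -> 0 < c -> 0 < eps < 1 -> (1 <= d)%nat ->
  (forall k, idx d k -> S k -> eps ^ 2 * w k < 1 ->
     Forall (fun z => (Z.abs z <= Z.of_nat B)%Z) k /\ (nnz k <= t)%nat) ->
  INR B <= exp (ln (/ eps) / c) + 1 -> INR t <= exp (2 * ln (/ eps)) + 1 ->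
  (exists n, IsInfoComp w S d eps n) /\
  forall n, IsInfoComp w S d eps n ->
    ln (INR n) <= INR d * (ln 5 + ln (/ eps) / c) /\
    ln (INR n) <= 2 * exp (2 * ln (/ eps)) * (ln 10 + ln (/ eps) / c + ln (INR d)).
Proof.
  intros Hw Hc He Hd Hk HB Ht.
  destruct (gen_bounds w S d eps B t Hw (proj1 He) Hk) as [Hex Hn]. split; auto.
  intros n Hi. destruct (Hn n Hi) as [N1 N2].
  set (a := ln (/ eps)) in *.
  assert (Ha : 0 <= a) by (apply ln_inv_eps_nonneg; auto).
  assert (Hea : 1 <= exp (a / c)) by (rewrite <- exp_0; apply exp_le; unfold Rdiv; apply Rmult_le_pos; [lra| left; apply Rinv_0_lt_compat; auto]).
  assert (HBr : 0 < INR (2 * B + 1)) by (apply lt_0_INR; lia).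
  assert (HlnB : ln (INR (2 * B + 1)) <= ln 5 + a / c).
  { rewrite <- (ln_exp (a / c)). rewrite <- ln_mult by (lra || apply exp_pos).
    apply ln_le'; auto. rewrite plus_INR, mult_INR. simpl (INR 1). simpl (INR 2). lra. }
  assert (HlnB0 : 0 <= ln (INR (2 * B + 1))) by (apply ln_INR_nonneg).
  assert (Hdr : 1 <= INR d) by (apply (le_INR 1); auto).
  split.
  - eapply Rle_trans. apply ln_nat_le; [|exact N1]. apply Nat.le_succ_l, Nat.neq_0_lt_0, Nat.pow_nonzero; lia.
    rewrite pow_INR, ln_pow by auto. apply Rmult_le_compat_l. apply pos_INR. auto.
  - eapply Rle_trans. apply ln_nat_le; [|exact N2]. apply Nat.le_succ_l, Nat.neq_0_lt_0, Nat.pow_nonzero; lia.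
    rewrite pow_INR, ln_pow by (rewrite mult_INR; apply Rmult_lt_0_compat; auto; apply lt_0_INR; lia).
    rewrite mult_INR, ln_mult by (auto; apply lt_0_INR; lia).
    assert (Hld : ln (INR (d + 1)) <= ln 2 + ln (INR d)).
    { rewrite <- ln_mult by lra. apply ln_le'. apply lt_0_INR; lia. rewrite plus_INR. simpl (INR 1). lra. }
    assert (Hl10 : ln 10 = ln 5 + ln 2) by (rewrite <- ln_mult by lra; f_equal; lra).
    assert (Hld0 : 0 <= ln (INR (d + 1))) by apply ln_INR_nonneg.
    assert (Hea2 : 1 <= exp (2 * a)) by (rewrite <- exp_0; apply exp_le; lra).
    assert (INR t <= 2 * exp (2 * a)) by lra.
    pose proof (pos_INR t).
    assert (0 <= ln (INR (2 * B + 1)) + ln (INR (d + 1))) by lra.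
    apply Rle_trans with (2 * exp (2 * a) * (ln (INR (2 * B + 1)) + ln (INR (d + 1)))).
    apply Rmult_le_compat_r; auto.
    apply Rmult_le_compat_l. lra. lra.
Qed.

Lemma WT_pos w S alpha beta c : 0 < alpha -> 0 < beta -> 0 < c -> (alpha > 2 \/ beta > 1) ->
  (forall eps d, 0 < eps < 1 -> (1 <= d)%nat -> exists n, IsInfoComp w S d eps n) ->
  Bounds w S c -> WT w S alpha beta.
Proof.
  intros Ha Hb Hc Hcase Hex Hbd. split; auto.
  intros eta Heta. destruct (analysis alpha beta c eta Ha Hb Hc Heta Hcase) as [M HM].
  exists M. intros eps d n He Hd HM' Hn.
  destruct (Hbd eps d n He Hd Hn) as [B1 B2].
  assert (Hdr : 0 < INR d) by (apply lt_0_INR; lia).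
  assert (Hb0 : 0 <= ln (INR d)) by (rewrite <- ln_1; apply ln_le'; [lra|apply (le_INR 1); auto]).
  assert (Hie : 0 < / eps) by (apply Rinv_0_lt_compat; lra).
  unfold Rpower.
  assert (HD : 0 < exp (alpha * ln (/ eps)) + exp (beta * ln (INR d))) by (pose proof (exp_pos (alpha * ln (/ eps))); pose proof (exp_pos (beta * ln (INR d))); lra).
  rewrite Rabs_pos_eq.
  2: { unfold Rdiv. apply Rmult_le_pos. apply ln_INR_nonneg. left; apply Rinv_0_lt_compat; auto. }
  apply HM; auto.
  - apply ln_inv_eps_nonneg; auto.
  - rewrite !exp_ln; auto.
  - apply ln_INR_nonneg.
  - rewrite exp_ln; auto.
Qed.

Lemma delta_exists eps W : 0 < eps < 1 -> 1 <= W -> eps ^ 2 * W < 1 -> exists delta, 0 < delta /\ (eps + delta) ^ 2 * W < 1.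
Proof.
  intros He HW H. exists ((1 - eps ^ 2 * W) / (6 * W)). split.
  - apply Rdiv_lt_0_compat; lra.
  - set (dl := (1 - eps ^ 2 * W) / (6 * W)).
    assert (Hdl : dl * W = (1 - eps ^ 2 * W) / 6) by (unfold dl; field; lra).
    assert (0 < dl) by (apply Rdiv_lt_0_compat; lra).
    assert (dl <= 1) by (assert (dl * W <= 1) by nra; nra).
    assert ((eps + dl) ^ 2 <= eps ^ 2 + 3 * dl) by (simpl; nra).
    nra.
Qed.

Lemma WT_neg w S alpha beta : 0 < alpha <= 2 -> 0 < beta <= 1 ->
  (forall d eps n, (1 <= d)%nat -> eps = / sqrt (INR d + 2) -> IsInfoComp w S d eps n ->
      INR d * ln 2 <= ln (INR n)) -> ~ WT w S alpha beta.
Proof.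
  intros Ha Hb Hlow [Hex Hlim].
  assert (Hl2 : 0 < ln 2) by (rewrite <- ln_1; apply ln_increasing; lra).
  destruct (Hlim (ln 2 / 5)) as [M HM]. apply Rdiv_lt_0_compat; lra.
  set (d := (Z.to_nat (up (Rabs M)) + 1)%nat).
  assert (Hd1 : (1 <= d)%nat) by (unfold d; lia).
  assert (HdM : INR d > M).
  { unfold d. rewrite plus_INR, INR_IZR_INZ. simpl (INR 1).
    destruct (archimed (Rabs M)) as [h1 h2]. pose proof (Rle_abs M).
    assert (0 < IZR (up (Rabs M))) by (pose proof (Rabs_pos M); lra).
    rewrite Z2Nat.id. lra. apply le_IZR. lra. }
  assert (Hdr : 1 <= INR d) by (apply (le_INR 1); auto).
  set (s := sqrt (INR d + 2)).
  assert (Hs1 : 1 < s) by (unfold s; rewrite <- sqrt_1; apply sqrt_lt_1_alt; lra).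
  assert (Hss : s * s = INR d + 2) by (unfold s; apply sqrt_sqrt; lra).
  set (eps := / s).
  assert (He : 0 < eps < 1).
  { unfold eps. split. apply Rinv_0_lt_compat; lra. rewrite <- Rinv_1. apply Rinv_lt_contravar; lra. }
  destruct (Hex eps d He Hd1) as [n Hn].
  assert (Hie : / eps = s) by (unfold eps; field; lra).
  specialize (HM eps d n He Hd1). rewrite Hie in HM.
  assert (HMs : s + INR d > M) by lra. specialize (HM HMs Hn).
  specialize (Hlow d eps n Hd1 eq_refl Hn).
  assert (HD1 : Rpower s alpha <= INR d + 2).
  { unfold Rpower. rewrite <- (exp_ln (INR d + 2)) by lra. apply exp_le.
    assert (E : ln (INR d + 2) = 2 * ln s) by (rewrite <- Hss, ln_mult by lra; ring).
    rewrite E. assert (0 <= ln s) by (rewrite <- ln_1; apply ln_le'; lra). nra. }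
  assert (HD2 : Rpower (INR d) beta <= INR d).
  { unfold Rpower. rewrite <- (exp_ln (INR d)) at 2 by lra. apply exp_le.
    assert (0 <= ln (INR d)) by (rewrite <- ln_1; apply ln_le'; lra). nra. }
  assert (HD0 : 0 < Rpower s alpha + Rpower (INR d) beta) by (unfold Rpower; pose proof (exp_pos (alpha * ln s)); pose proof (exp_pos (beta * ln (INR d))); lra).
  set (D := Rpower s alpha + Rpower (INR d) beta) in *.
  pose proof (Rle_abs (ln (INR n) / D)).
  assert (ln (INR n) / D <= ln 2 / 5) by lra.
  assert (ln (INR n) <= ln 2 / 5 * D).
  { apply Rmult_le_compat_r with (r := D) in H0; [|lra]. unfold Rdiv in H0 at 1.
    rewrite Rmult_assoc, Rinv_l in H0 by lra. lra. }
  assert (D <= 4 * INR d) by (unfold D; lra).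
  assert (ln 2 / 5 * D <= ln 2 / 5 * (4 * INR d)) by (apply Rmult_le_compat_l; lra).
  assert (0 < INR d * ln 2) by (apply Rmult_lt_0_compat; lra).
  lra.
Qed.

Lemma pw_nonneg z r : 0 <= pw z r.
Proof. unfold pw. destruct (Z.eqb z 0). lra. unfold Rpower; left; apply exp_pos. Qed.

Lemma absz_ge1 z : z <> 0%Z -> 1 <= IZR (Z.abs z).
Proof. intros H. apply IZR_le. lia. Qed.

Lemma pw_ge z r c : z <> 0%Z -> 0 <= c <= r -> exp (2 * c * ln (IZR (Z.abs z))) <= pw z r.
Proof. intros Hz Hc. unfold pw. destruct (Z.eqb_spec z 0); [tauto|]. unfold Rpower.
  apply exp_le. assert (0 <= ln (IZR (Z.abs z))) by (rewrite <- ln_1; apply ln_le'; [lra|apply absz_ge1; auto]).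
  nra. Qed.

Lemma pw_ge1 z r : z <> 0%Z -> 0 <= r -> 1 <= pw z r.
Proof. intros Hz Hr. rewrite <- exp_0. replace 0 with (2 * 0 * ln (IZR (Z.abs z))) by ring.
  apply pw_ge; auto; lra. Qed.

Lemma wsumR_nonneg Rs j k : 0 <= wsumR Rs j k.
Proof. revert j; induction k; intros j; simpl. lra. pose proof (pw_nonneg a (Rs j)); pose proof (IHk (S j)); lra. Qed.

Lemma wsumR_nnz Rs j k : (forall j', (1 <= j')%nat -> 0 < Rs j') -> (1 <= j)%nat -> INR (nnz k) <= wsumR Rs j k.
Proof. revert j; induction k; intros j HR Hj; simpl. lra.
  rewrite plus_INR. pose proof (IHk (S j) HR ltac:(lia)).
  destruct (Z.eqb_spec a 0). simpl. pose proof (pw_nonneg a (Rs j)). lra.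
  simpl. pose proof (pw_ge1 a (Rs j) n ltac:(pose proof (HR j Hj); lra)). lra. Qed.

Lemma wsumR_entries Rs c j k X : 0 < c -> (forall j', (1 <= j')%nat -> c <= Rs j') -> (1 <= j)%nat ->
  wsumR Rs j k < X -> Forall (fun z => z = 0%Z \/ exp (2 * c * ln (IZR (Z.abs z))) < X) k.
Proof. revert j; induction k; intros j Hc HR Hj Hw; constructor; simpl in Hw.
  - destruct (Z.eqb_spec a 0); [left; auto|right].
    pose proof (pw_ge a (Rs j) c n ltac:(pose proof (HR j Hj); lra)). pose proof (wsumR_nonneg Rs (S j) k). lra.
  - apply (IHk (S j)); auto. pose proof (pw_nonneg a (Rs j)). lra. Qed.

Lemma wsumR_bin Rs j k : Forall (fun z => z = 0%Z \/ z = 1%Z) k -> wsumR Rs j k <= INR (length k).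
Proof. revert j; induction k; intros j H; cbn [wsumR length]. simpl; lra. inversion H; subst.
  rewrite S_INR. pose proof (IHk (S j) H3). destruct H2 as [->| ->].
  - unfold pw; simpl. lra.
  - unfold pw, Rpower; simpl. rewrite ln_1, Rmult_0_r, exp_0. lra. Qed.

Lemma abssum_nnz k : INR (nnz k) <= abssum k.
Proof. induction k; simpl. lra. rewrite plus_INR. destruct (Z.eqb_spec a 0).
  subst; simpl; lra. simpl. pose proof (absz_ge1 a n). lra. Qed.

Lemma abssum_bin k : Forall (fun z => z = 0%Z \/ z = 1%Z) k -> abssum k <= INR (length k).
Proof. induction k; intros H; cbn [abssum length]. simpl; lra. inversion H; subst. rewrite S_INR. pose proof (IHk H3).
  destruct H2 as [->| ->]; simpl; lra. Qed.

Lemma up_nat r : 0 <= r -> exists N : nat, r < INR N /\ INR N <= r + 1.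
Proof. intros Hr. destruct (archimed r) as [h1 h2]. exists (Z.to_nat (up r)).
  assert (0 < up r)%Z by (apply lt_IZR; lra).
  rewrite INR_IZR_INZ, Z2Nat.id by lia. lra. Qed.

Lemma R_bounds Rs c : (forall j, (1 <= j)%nat -> 0 < Rs j) -> 0 < c -> (forall j, (1 <= j)%nat -> c <= Rs j) ->
  (forall eps d, 0 < eps < 1 -> (1 <= d)%nat -> exists n, IsInfoComp (wR Rs) SR d eps n) /\ Bounds (wR Rs) SR c.
Proof.
  intros Hpos Hc Hcj.
  assert (Hw : forall k, 0 <= wR Rs k) by (intros k; unfold wR; pose proof (wsumR_nonneg Rs 1 k); lra).
  assert (key : forall eps d, 0 < eps < 1 -> (1 <= d)%nat ->
    (exists n, IsInfoComp (wR Rs) SR d eps n) /\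
    forall n, IsInfoComp (wR Rs) SR d eps n ->
      ln (INR n) <= INR d * (ln 5 + ln (/ eps) / c) /\
      ln (INR n) <= 2 * exp (2 * ln (/ eps)) * (ln 10 + ln (/ eps) / c + ln (INR d))).
  { intros eps d He Hd.
    set (a := ln (/ eps)).
    destruct (up_nat (exp (a / c))) as [B [HB1 HB2]]. left; apply exp_pos.
    destruct (up_nat (exp (2 * a))) as [t [Ht1 Ht2]]. left; apply exp_pos.
    apply (bounds_from_B (wR Rs) SR c eps d B t); auto; try lra.
    intros k _ _ Hk. unfold wR in Hk.
    assert (HX : wsumR Rs 1 k < exp (2 * a)).
    { unfold a; rewrite exp2a by lra. pose proof (wsumR_nonneg Rs 1 k).
      assert (0 < eps ^ 2) by (apply pow_lt; lra).
      apply Rmult_lt_reg_l with (eps ^ 2); auto. rewrite Rinv_r by lra. nra. }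
    split.
    - eapply Forall_impl; [|apply (wsumR_entries Rs c 1 k _ Hc Hcj (le_n 1) HX)].
      intros z [->|Hz]. simpl; lia.
      destruct (Z.eq_dec z 0) as [->|Hz0]; [simpl; lia|].
      apply exp_lt_inv in Hz.
      pose proof (absz_ge1 z Hz0) as Hz1.
      assert (Hl : ln (IZR (Z.abs z)) < a / c).
      { apply Rmult_lt_reg_l with c; auto. unfold Rdiv. rewrite <- Rmult_assoc, (Rmult_comm c a), Rmult_assoc, Rinv_r by lra. lra. }
      apply exp_increasing in Hl. rewrite exp_ln in Hl by lra.
      rewrite INR_IZR_INZ in HB1. assert (IZR (Z.abs z) < IZR (Z.of_nat B)) by lra.
      apply lt_IZR in H. lia.
    - pose proof (wsumR_nnz Rs 1 k Hpos (le_n 1)).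
      apply INR_lt in Ht1 || idtac. assert (INR (nnz k) < INR t) by lra. apply INR_lt in H0. lia. }
  split; intros eps d; [intros He Hd; apply (key eps d He Hd)|].
  intros n He Hd Hn. apply (key eps d He Hd); auto.
Qed.

Lemma Inf_bounds c : 0 < c ->
  (forall eps d, 0 < eps < 1 -> (1 <= d)%nat -> exists n, IsInfoComp wInf SInf d eps n) /\ Bounds wInf SInf c.
Proof.
  intros Hc.
  assert (Habs : forall k, 0 <= abssum k) by (intros k; pose proof (abssum_nnz k); pose proof (pos_INR (nnz k)); lra).
  assert (Hw : forall k, 0 <= wInf k) by (intros k; unfold wInf; pose proof (Habs k); lra).
  assert (key : forall eps d, 0 < eps < 1 -> (1 <= d)%nat ->
    (exists n, IsInfoComp wInf SInf d eps n) /\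
    forall n, IsInfoComp wInf SInf d eps n ->
      ln (INR n) <= INR d * (ln 5 + ln (/ eps) / c) /\
      ln (INR n) <= 2 * exp (2 * ln (/ eps)) * (ln 10 + ln (/ eps) / c + ln (INR d))).
  { intros eps d He Hd.
    set (a := ln (/ eps)).
    destruct (up_nat (exp (2 * a))) as [t [Ht1 Ht2]]. left; apply exp_pos.
    apply (bounds_from_B wInf SInf c eps d 1 t); auto; try lra.
    all: try (simpl; pose proof (exp_pos (ln (/ eps) / c)); lra).
    intros k _ HS Hk. unfold wInf in Hk.
    assert (HX : abssum k < exp (2 * a)).
    { unfold a; rewrite exp2a by lra. pose proof (Habs k).
      assert (0 < eps ^ 2) by (apply pow_lt; lra).
      apply Rmult_lt_reg_l with (eps ^ 2); auto. rewrite Rinv_r by lra. nra. }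
    split.
    - eapply Forall_impl; [|apply HS]. intros z Hz. cbv beta in Hz |- *. change (Z.of_nat 1) with 1%Z. lia.
    - pose proof (abssum_nnz k).
      assert (INR (nnz k) < INR t) by lra. apply INR_lt in H0. lia. }
  split; intros eps d; [intros He Hd; apply (key eps d He Hd)|].
  intros n He Hd Hn. apply (key eps d He Hd); auto.
Qed.

Lemma lower_gen w S : (forall k, 0 <= w k) ->
  (forall d k, In k (bin d) -> S k /\ w k <= INR d + 1) ->
  forall d eps n, (1 <= d)%nat -> eps = / sqrt (INR d + 2) -> IsInfoComp w S d eps n ->
      INR d * ln 2 <= ln (INR n).
Proof.
  intros Hw Hbin d eps n Hd Heps [Hn _].
  assert (Hdr : 1 <= INR d) by (apply (le_INR 1); auto).
  set (s := sqrt (INR d + 2)) in *.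
  assert (Hs1 : 1 < s) by (unfold s; rewrite <- sqrt_1; apply sqrt_lt_1_alt; lra).
  assert (Hss : s * s = INR d + 2) by (unfold s; apply sqrt_sqrt; lra).
  assert (He : 0 < eps < 1).
  { subst eps. split. apply Rinv_0_lt_compat; lra. rewrite <- Rinv_1. apply Rinv_lt_contravar; lra. }
  assert (He2 : eps ^ 2 * (INR d + 1) < 1).
  { subst eps. replace ((/ s) ^ 2 * (INR d + 1)) with ((INR d + 1) / (s * s)) by (simpl; field; lra).
    rewrite Hss. apply Rmult_lt_reg_r with (INR d + 2); [lra|]. unfold Rdiv.
    rewrite Rmult_assoc, Rinv_l by lra. lra. }
  destruct (delta_exists eps (INR d + 1) He ltac:(lra) He2) as [delta [Hdl Hdl2]].
  assert (H2 : (2 ^ d <= n)%nat).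
  { destruct (Nat.le_gt_cases (2 ^ d) n) as [h|h]; auto. exfalso.
    apply (lower w S d n eps delta (INR d + 1) (bin d) Hw (bin_NoDup d)); auto.
    - intros k Hk. destruct (Hbin d k Hk). split; auto. destruct (bin_elem d k Hk); auto.
    - rewrite bin_length; auto. }
  eapply Rle_trans; [|apply ln_nat_le; [|exact H2]].
  - rewrite pow_INR. replace (INR 2) with 2 by (simpl; lra). rewrite ln_pow by lra. lra.
  - assert (2 ^ d <> 0)%nat by (apply Nat.pow_nonzero; lia). lia.
Qed.

Theorem theorem2p4 (Rs : nat -> R)
  (Rs_pos : forall j, (1 <= j)%nat -> 0 < Rs j)
  (Rs_inf : exists c, 0 < c /\ forall j, (1 <= j)%nat -> c <= Rs j)
  (alpha beta : R) (halpha : 0 < alpha) (hbeta : 0 < beta) :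
  (WT (wR Rs) SR alpha beta <->
     ((alpha > 2 /\ beta > 0) \/ (alpha > 0 /\ beta > 1))) /\
  (WT wInf SInf alpha beta <->
     ((alpha > 2 /\ beta > 0) \/ (alpha > 0 /\ beta > 1))) /\
  ~ WT (wR Rs) SR 1 1 /\ ~ WT wInf SInf 1 1.
Proof.
  destruct Rs_inf as [c [Hc Hcj]].
  destruct (R_bounds Rs c Rs_pos Hc Hcj) as [HRex HRb].
  destruct (Inf_bounds c Hc) as [HIex HIb].
  assert (HwR : forall k, 0 <= wR Rs k) by (intros k; unfold wR; pose proof (wsumR_nonneg Rs 1 k); lra).
  assert (HwI : forall k, 0 <= wInf k).
  { intros k; unfold wInf. pose proof (abssum_nnz k); pose proof (pos_INR (nnz k)); lra. }
  assert (HRlow := lower_gen (wR Rs) SR HwR).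
  assert (HIlow := lower_gen wInf SInf HwI).
  assert (HRbin : forall d k, In k (bin d) -> SR k /\ wR Rs k <= INR d + 1).
  { intros d k Hk. destruct (bin_elem d k Hk) as [Hl Hf]. split. exact I.
    unfold wR. pose proof (wsumR_bin Rs 1 k Hf). rewrite Hl in H. lra. }
  assert (HIbin : forall d k, In k (bin d) -> SInf k /\ wInf k <= INR d + 1).
  { intros d k Hk. destruct (bin_elem d k Hk) as [Hl Hf]. split.
    - eapply Forall_impl; [|exact Hf]. intros z [->| ->]; lia.
    - unfold wInf. pose proof (abssum_bin k Hf). rewrite Hl in H. lra. }
  specialize (HRlow HRbin). specialize (HIlow HIbin).
  split; [|split; [|split]].
  - split.
    + intros HW. destruct (classic (alpha > 2 \/ beta > 1)) as [h|h]. destruct h; [left|right]; lra.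
      exfalso. apply (WT_neg (wR Rs) SR alpha beta); auto; lra.
    + intros h. apply (WT_pos _ _ alpha beta c); auto. destruct h; [left|right]; lra.
  - split.
    + intros HW. destruct (classic (alpha > 2 \/ beta > 1)) as [h|h]. destruct h; [left|right]; lra.
      exfalso. apply (WT_neg wInf SInf alpha beta); auto; lra.
    + intros h. apply (WT_pos _ _ alpha beta c); auto. destruct h; [left|right]; lra.
  - apply (WT_neg (wR Rs) SR 1 1); auto; lra.
  - apply (WT_neg wInf SInf 1 1); auto; lra.
Qed.
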